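(* Let $\beta\in\mathbb{N}^n$. The linear operators on $\mathbb{C}[z_1,\ldots,z_n]$ defined by $z^\alpha\mapsto J(\alpha,\beta)z^\alpha$ ($\alpha\in\mathbb{N}^n$) and by $z^\alpha\mapsto(\beta)_\alpha z^\alpha$ ($\alpha\in\mathbb{N}^n$) preserve stability.
   Context: $H=\{z\in\mathbb{C}:\Im(z)>0\}$; a polynomial is stable if it is non-zero whenever all variables lie in $H$; a linear operator preserves stability if it maps each stable polynomial to a stable polynomial or to $0$. $(\beta)_\alpha=\beta!/(\beta-\alpha)!=\prod_i\beta_i!/(\beta_i-\alpha_i)!$ if $\alpha_i\le\beta_i$ for all $i$, and $0$ otherwise. $J(\alpha,\beta)=(\beta)_\alpha\beta^{-\alpha}$ with $\beta^{-\alpha}=\prod_i\beta_i^{-\alpha_i}$, using the convention $k^{\pm k}=1$ for $k=0$. *)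

(* Defs.v *)
From HB Require Import structures.
From mathcomp Require Import all_boot all_order all_algebra.
From mathcomp Require Import complex.
From mathcomp Require Import mpoly.
Set Implicit Arguments. Unset Strict Implicit. Unset Printing Implicit Defensive.
Import Order.TTheory GRing.Theory Num.Theory.
Local Open Scope ring_scope.

(* The complex numbers are R[i] for a real closed field R (R = the reals gives C). *)

Definition stable (R : rcfType) (n : nat) (p : {mpoly R[i][n]}) : Prop :=
  forall z : 'I_n -> R[i], (forall i, 0 < complex.Im (z i)) -> p.@[z] != 0.

Definition preserves_stability (R : rcfType) (n : nat)
  (T : {mpoly R[i][n]} -> {mpoly R[i][n]}) : Prop :=
  forall p, stable p -> T p = 0 \/ stable (T p).

(* (beta)_alpha = prod_i beta_i!/(beta_i-alpha_i)!  (0 unless alpha <= beta);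
   ffact (b ^_ a) is exactly b!/(b-a)! if a <= b and 0 otherwise. *)
Definition pochf (n : nat) (alpha beta : 'X_{1..n}) : nat :=
  \prod_(i < n) (beta i ^_ alpha i)%N.

(* J(alpha,beta) = (beta)_alpha * prod_i beta_i^{-alpha_i}; note 0^{-0} = 1 and
   when beta_i = 0 < alpha_i the factor (beta)_alpha vanishes anyway. *)
Definition Jcoef (F : fieldType) (n : nat) (alpha beta : 'X_{1..n}) : F :=
  (pochf alpha beta)%:R * \prod_(i < n) ((beta i)%:R ^- alpha i).

Definition diag_op (F : fieldType) (n : nat) (c : 'X_{1..n} -> F)
  (p : {mpoly F[n]}) : {mpoly F[n]} :=
  \sum_(m <- msupp p) (c m * p@_m) *: 'X_[m].

(* Main.v *)
Require Import Defs.
From HB Require Import structures.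
From mathcomp Require Import all_boot all_order all_algebra.
From mathcomp Require Import complex.
From mathcomp Require Import mpoly.
Set Implicit Arguments. Unset Strict Implicit. Unset Printing Implicit Defensive.
Import Order.TTheory GRing.Theory Num.Theory.
Local Open Scope ring_scope.
From mathcomp Require Import ring lra.

Section DiagOp.
Variables (F : fieldType) (n : nat).
Implicit Types (p : {mpoly F[n]}) (c : 'X_{1..n} -> F).

Lemma diag_op_meval c p z :
  (diag_op c p).@[z] = \sum_(m <- msupp p) c m * p@_m * \prod_i z i ^+ m i.
Proof.
rewrite /diag_op raddf_sum /=; apply: eq_bigr => m _.
by rewrite mevalZ mevalX.
Qed.

Lemma mcoeff_diag_op c p m : (diag_op c p)@_m = c m * p@_m.
Proof.
rewrite /diag_op raddf_sum /=.
under eq_bigr => k _ do rewrite mcoeffZ mcoeffX.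
case: (boolP (m \in msupp p)) => Hm.
  rewrite (bigD1_seq m) //= ?msupp_uniq // eqxx mulr1 big1 ?addr0 //.
  by move=> k /negbTE ->; rewrite mulr0.
rewrite big1_seq ?(memN_msupp_eq0 Hm) ?mulr0 //.
move=> k Hk; case: eqP => [Ekm|]; last by rewrite mulr0.
by subst; move: Hk; rewrite (negbTE Hm).
Qed.

Lemma diag_op_comp c1 c2 p :
  diag_op c1 (diag_op c2 p) = diag_op (fun m => c1 m * c2 m) p.
Proof. by apply/mpolyP => m; rewrite !mcoeff_diag_op mulrA. Qed.

Lemma eq_diag_op c1 c2 p : c1 =1 c2 -> diag_op c1 p = diag_op c2 p.
Proof. by move=> E; apply/mpolyP => m; rewrite !mcoeff_diag_op E. Qed.

Lemma diag_op0 c : diag_op c 0 = 0.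
Proof. by apply/mpolyP => m; rewrite mcoeff_diag_op mcoeff0 mulr0. Qed.

Lemma diag_op1 p : diag_op (fun _ => 1) p = p.
Proof. by apply/mpolyP => m; rewrite mcoeff_diag_op mul1r. Qed.

End DiagOp.
Section Univ.
Variable R : rcfType.
Local Notation C := (R[i]).
Local Notation Im := (@complex.Im R).
Local Notation Re := (@complex.Re R).

Lemma ImD (x y : C) : Im (x + y) = Im x + Im y.
Proof. by case: x; case: y. Qed.
Lemma ImN (x : C) : Im (- x) = - Im x.
Proof. by case: x. Qed.
Lemma ImB (x y : C) : Im (x - y) = Im x - Im y.
Proof. by rewrite ImD ImN. Qed.
Lemma ImVc (x : C) : Im (x^-1) = - Im x / (Re x ^+ 2 + Im x ^+ 2).
Proof. case: x => a b /=. by rewrite mulNr. Qed.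

Lemma ImV_gt0 (x : C) : Im x < 0 -> 0 < Im (x^-1).
Proof.
move=> Hx; rewrite ImVc divr_gt0 ?oppr_gt0 //.
rewrite ltr_wpDl ?sqr_ge0 //.
by rewrite exprn_even_gt0 //= (lt_eqF Hx).
Qed.

Lemma Im_neg_neq0 (x : C) : Im x < 0 -> x != 0.
Proof. by apply: contraTneq => ->; rewrite /= ltxx. Qed.

Definition Phi (N : nat) (q h : {poly C}) : {poly C} := \sum_(k < N) q`_k *: h^`(k).

Lemma PhiZ N a (q h : {poly C}) : Phi N (a *: q) h = a *: Phi N q h.
Proof.
rewrite /Phi scaler_sumr; apply: eq_bigr => k _.
by rewrite coefZ scalerA.
Qed.

Lemma PhiB N (q1 q2 h : {poly C}) : Phi N (q1 - q2) h = Phi N q1 h - Phi N q2 h.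
Proof.
rewrite /Phi -sumrB; apply: eq_bigr => k _.
by rewrite coefB scalerBl.
Qed.

Lemma Phi1 N (h : {poly C}) : (0 < N)%N -> Phi N 1 h = h.
Proof.
case: N => // N _; rewrite /Phi big_ord_recl /= coef1 eqxx scale1r.
rewrite big1 ?addr0 // => k _; by rewrite coef1 /= scale0r.
Qed.

Lemma PhiX N (Q h : {poly C}) : (size Q < N)%N -> Phi N ('X * Q) h = (Phi N Q h)^`().
Proof.
case: N => // N HQ; rewrite /Phi big_ord_recl coefXM eqxx scale0r add0r.
rewrite raddf_sum big_ord_recr /= (nth_default 0 HQ) scale0r deriv0 addr0.
by apply: eq_bigr => k _; rewrite coefXM /= derivZ -derivnS add0n.
Qed.

Lemma PhiXsubC N (Q h : {poly C}) r : (size Q < N)%N ->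
  Phi N (('X - r%:P) * Q) h = (Phi N Q h)^`() - r *: Phi N Q h.
Proof.
by move=> HQ; rewrite mulrBl PhiB PhiX // mul_polyC PhiZ.
Qed.

Lemma LD (w : C) (rs : seq C) : Im w < 0 -> (forall a, a \in rs -> 0 <= Im a) ->
  let P := \prod_(a <- rs) ('X - a%:P) in
  P.[w] != 0 /\ 0 <= Im (P^`().[w] / P.[w]) /\ (rs != [::] -> 0 < Im (P^`().[w] / P.[w])).
Proof.
move=> Hw; elim: rs => [|a rs IH] Ha /=.
  by rewrite big_nil hornerC oner_eq0 derivC horner0 mul0r /= lexx.
have [H1 [H2 H3]] := IH (fun b Hb => Ha b (mem_behead (s:=a::rs) Hb)).
have Hwa : Im (w - a) < 0.
  by rewrite ImB; have := Ha a (mem_head _ _) => Ha'; rewrite subr_lt0 (lt_le_trans Hw Ha').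
have Hwa0 := Im_neg_neq0 Hwa.
set P := \prod_(b <- rs) ('X - b%:P) in H1 H2 H3 *.
rewrite big_cons derivM derivXsubC mul1r !hornerE.
have E : (P.[w] + (w - a) * P^`().[w]) / ((w - a) * P.[w]) = (w - a)^-1 + P^`().[w] / P.[w].
  by field; rewrite Hwa0 H1.
have Hpos : 0 < Im ((w - a)^-1) by apply: ImV_gt0.
rewrite E ImD mulf_neq0 //; split => //; split => [|_].
  by rewrite addr_ge0 // ltW.
by rewrite ltr_pwDl.
Qed.



Definition noroot_lower (h : {poly C}) := forall w : C, Im w < 0 -> h.[w] != 0.

Lemma ST (h : {poly C}) (r : C) : h != 0 -> noroot_lower h -> r != 0 -> Im r <= 0 ->
  h^`() - r *: h != 0 /\ noroot_lower (h^`() - r *: h).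
Proof.
move=> Hh0 Hh Hr Hir; split.
  apply/eqP => E.
  have E' : h^`() = r *: h by apply/eqP; rewrite -subr_eq0 E.
  have E2 : size h^`() = size h by rewrite E' size_scale.
  by have := lt_size_deriv Hh0; rewrite E2 ltnn.
move=> w Hw; apply/eqP => E.
have [rs Ers] := closed_field_poly_normal h.
set c := lead_coef h in Ers.
have Hc : c != 0 by rewrite lead_coef_eq0.
have Hrs : forall a, a \in rs -> 0 <= Im a.
  move=> a Ha; rewrite leNgt; apply/negP => Hlt.
  have : h.[a] != 0 by apply: Hh.
  have : root (\prod_(a <- rs) ('X - a%:P)) a by rewrite root_prod_XsubC.
  by rewrite Ers hornerZ rootE => /eqP ->; rewrite mulr0 eqxx.
have [H1 [H2 H3]] := LD Hw Hrs.
set P := \prod_(a <- rs) ('X - a%:P) in Ers H1 H2 H3.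
move: E; rewrite Ers derivZ !hornerE => /eqP; rewrite subr_eq0 => /eqP E.
have Er : r = P^`().[w] / P.[w].
  apply: (mulIf H1); rewrite divfK //.
  by apply: (mulfI Hc); rewrite E /= mulrA [c * r]mulrC.
case: (altP (rs =P [::])) => Hrs0.
  move: Er; rewrite /P Hrs0 big_nil derivC horner0 mul0r => Er.
  by rewrite Er eqxx in Hr.
have := H3 Hrs0; rewrite -Er => Hlt.
by have := lt_le_trans Hlt Hir; rewrite ltxx.
Qed.

Lemma U0 (q : {poly C}) N b (w : C) : q.[0] != 0 -> (forall t : C, 0 < Im t -> q.[t] != 0) ->
  (size q <= N)%N -> Im w < 0 -> (Phi N q 'X^b).[w] != 0.
Proof.
move=> Hq0 Hq HN Hw.
have [rs Ers] := closed_field_poly_normal q.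
set c := lead_coef q in Ers.
have Hqn0 : q != 0 by apply: contraNneq Hq0 => ->; rewrite horner0.
have Hc : c != 0 by rewrite lead_coef_eq0.
have Hsz : size q = (size rs).+1 by rewrite Ers size_scale // size_prod_XsubC.
have Hrs : forall r, r \in rs -> r != 0 /\ Im r <= 0.
  move=> r Hr; have Hroot : q.[r] = 0.
    have : root (\prod_(a <- rs) ('X - a%:P)) r by rewrite root_prod_XsubC.
    by rewrite Ers hornerZ rootE => /eqP ->; rewrite mulr0.
  split.
    by apply/eqP => E; rewrite E in Hroot; rewrite Hroot eqxx in Hq0.
  rewrite leNgt; apply/negP => Hlt.
  by have := Hq r Hlt; rewrite Hroot eqxx.
rewrite Ers PhiZ hornerZ mulf_neq0 //.
have HN' : (size rs < N)%N by rewrite -ltnS -Hsz.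
suff: forall rs', (forall r, r \in rs' -> r != 0 /\ Im r <= 0) -> (size rs' < N)%N ->
  Phi N (\prod_(a <- rs') ('X - a%:P)) 'X^b != 0 /\
  noroot_lower (Phi N (\prod_(a <- rs') ('X - a%:P)) 'X^b).
  by move=> /(_ rs Hrs HN') [_ ]; apply.
elim => [|a rs' IH] Ha Hs.
  rewrite big_nil Phi1; last by apply: leq_ltn_trans Hs.
  split; first by rewrite monic_neq0 ?monicXn.
  by move=> v Hv; rewrite hornerXn expf_neq0 // Im_neg_neq0.
have [IH1 IH2] := IH (fun r Hr => Ha r (mem_behead (s:=a::rs') Hr)) (ltnW Hs).
have [Ha1 Ha2] := Ha a (mem_head _ _).
rewrite big_cons PhiXsubC; last by rewrite size_prod_XsubC.
by apply: ST.
Qed.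

End Univ.



Lemma ffactD b L k : (b ^_ (L + k) = b ^_ L * (b - L) ^_ k)%N.
Proof.
elim: k => [|k IH]; first by rewrite addn0 ffactn0 muln1.
by rewrite addnS !ffactnSr IH subnDA mulnA.
Qed.

Section SV.
Variable R : rcfType.
Local Notation C := (R[i]).
Local Notation Im := (@complex.Im R).
Variable n : nat.

Lemma Phi0 N (h : {poly C}) : Phi N 0 h = 0.
Proof. by rewrite /Phi big1 // => k _; rewrite coef0 scale0r. Qed.
Lemma PhiD N (q1 q2 h : {poly C}) : Phi N (q1 + q2) h = Phi N q1 h + Phi N q2 h.
Proof. by rewrite /Phi -big_split; apply: eq_bigr => k _; rewrite coefD scalerDl. Qed.
Lemma Phi_sum I (r : seq I) (F : I -> {poly C}) N h :
  Phi N (\sum_(x <- r) F x) h = \sum_(x <- r) Phi N (F x) h.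
Proof.
elim: r => [|x r IH]; first by rewrite !big_nil Phi0.
by rewrite !big_cons PhiD IH.
Qed.

Lemma PhiXnXn N e b : (b < N)%N ->
  Phi N ('X^e : {poly C}) 'X^b = 'X^(b - e) *+ b ^_ e.
Proof.
move=> HbN; rewrite /Phi.
case: (ltnP e N) => He.
  rewrite (bigD1 (Ordinal He)) //= coefXn eqxx scale1r big1 ?addr0 ?derivnXn //.
  move=> k Hk; rewrite coefXn; case: eqP => [Ek|]; last by rewrite scale0r.
  by move: Hk; rewrite -(inj_eq val_inj) /= Ek eqxx.
rewrite big1; last by move=> k _; rewrite coefXn ltn_eqF ?scale0r // (leq_trans (ltn_ord k) He).
by rewrite ffact_small ?mulr0n // (leq_trans HbN).
Qed.

Lemma key_eval (t : C) e b : t != 0 ->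
  ('X^(b - e) *+ b ^_ e : {poly C}).[t^-1] * t ^+ b = (b ^_ e)%:R * t ^+ e.
Proof.
move=> Ht; case: (leqP e b) => Heb.
  rewrite hornerMn hornerXn -mulr_natl -mulrA; congr (_ * _).
  by rewrite -{2}(subnK Heb) exprD exprVn mulrA mulVf ?mul1r // expf_neq0.
by rewrite ffact_small // mulr0n horner0 !mul0r.
Qed.


Definition upd (z : 'I_n -> C) (i : 'I_n) (t : C) := fun j => if j == i then t else z j.

Lemma prod_upd (z : 'I_n -> C) i t (m : 'X_{1..n}) :
  \prod_j (upd z i t j) ^+ m j = t ^+ m i * \prod_j (upd z i 1 j) ^+ m j.
Proof.
rewrite (bigD1 i) //= [in RHS](bigD1 i) //= /upd !eqxx expr1n mul1r; congr (_ * _).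
by apply: eq_bigr => j /negbTE ->.
Qed.

Lemma upd_H (z : 'I_n -> C) i t : (forall j, 0 < Im (z j)) -> 0 < Im t ->
  forall j, 0 < Im (upd z i t j).
Proof. by move=> Hz Ht j; rewrite /upd; case: eqP. Qed.

Lemma stable_neq0 (p : {mpoly C[n]}) : stable p -> p != 0.
Proof.
move=> Hp; apply/eqP => E; have := Hp (fun _ => 'i%C).
by rewrite E meval0 eqxx => /(_ (fun _ => ltr01)).
Qed.

Lemma ImV_lt0 (x : C) : 0 < Im x -> Im (x^-1) < 0.
Proof.
move=> Hx; rewrite ImVc mulNr oppr_lt0 divr_gt0 //.
by rewrite ltr_wpDl ?sqr_ge0 // exprn_even_gt0 //= (gt_eqF Hx).
Qed.

Definition Bfun (p : {mpoly C[n]}) (i : 'I_n) (L : nat) (z : 'I_n -> C) :=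
  \sum_(m <- msupp p | m i == L) p@_m * \prod_j (upd z i 1 j) ^+ m j.

Definition FH_prop := forall (p : {mpoly C[n]}) (i : 'I_n) (L : nat),
  stable p -> (forall m, m \in msupp p -> (L <= m i)%N) ->
  (exists2 m, m \in msupp p & m i = L) ->
  forall z, (forall j, 0 < Im (z j)) -> Bfun p i L z != 0.

Lemma SV (FH : FH_prop) (i : 'I_n) (b : nat) :
  preserves_stability (diag_op (fun a : 'X_{1..n} => (b ^_ a i)%:R : C)).
Proof.
move=> p Hp; have Hp0 := stable_neq0 Hp.
pose P k := has (fun m : 'X_{1..n} => m i == k) (msupp p).
have exP : exists k, P k.
  case Es: (msupp p) => [|m s].
    by move: Hp0; rewrite -msupp_eq0 Es.
  by exists (m i); rewrite /P Es /= eqxx.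
case: (ex_minnP exP) => L /hasP [m0 Hm0 /eqP Hm0L] HLmin.
have HL : forall m, m \in msupp p -> (L <= m i)%N.
  by move=> m Hm; apply: HLmin; apply/hasP; exists m.
case: (ltnP b L) => HbL.
  left; rewrite /diag_op big1_seq // => m Hm.
  by rewrite ffact_small ?mul0r ?scale0r // (leq_trans HbL (HL m Hm)).
right => z Hz.
set t := z i; set u := upd z i 1.
pose c m := p@_m * \prod_j u j ^+ m j.
pose qt : {poly C} := \sum_(m <- msupp p) c m *: 'X^(m i - L).
have Heval : forall s, qt.[s] * s ^+ L = p.@[upd z i s].
  move=> s; rewrite mevalE horner_sum mulr_suml; apply: eq_big_seq => m Hm.
  rewrite hornerZ hornerXn prod_upd -mulrA -exprD subnK ?HL //.
  by rewrite /c /u; ring.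
have Hq0 : qt.[0] != 0.
  have Hex : exists2 m, m \in msupp p & m i = L by exists m0.
  have := FH p i L Hp HL Hex z Hz.
  rewrite /Bfun horner_sum big_mkcond /=; congr (_ != _); apply: eq_big_seq => m Hm.
  rewrite hornerZ hornerXn expr0n subn_eq0 eqn_leq HL // andbT.
  by case: ifP; rewrite ?mulr1 ?mulr0.
have HqH : forall s : C, 0 < Im s -> qt.[s] != 0.
  move=> s Hs; have := Hp _ (upd_H i Hz Hs); rewrite -Heval.
  by apply: contraNneq => ->; rewrite mul0r.
set b' := (b - L)%N.
set N := maxn (size qt) b'.+1.
have Ht : 0 < Im t by apply: Hz.
have Ht0 : t != 0 by apply: contraTneq Ht => ->; rewrite /= ltxx.
have HU := U0 b' Hq0 HqH (leq_maxl (size qt) b'.+1) (ImV_lt0 Ht).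
have E : (diag_op (fun a : 'X_{1..n} => (b ^_ a i)%:R) p).@[z] =
    (b ^_ L)%:R * t ^+ L * ((Phi N qt 'X^b').[t^-1] * t ^+ b').
  rewrite diag_op_meval Phi_sum horner_sum mulr_suml mulr_sumr; apply: eq_big_seq => m Hm.
  rewrite PhiZ PhiXnXn ?leq_maxr // hornerZ -[c m * _ * _]mulrA key_eval //.
  have -> : \prod_i0 z i0 ^+ m i0 = \prod_j (upd z i t j) ^+ m j.
    by apply: eq_bigr => j _; rewrite /upd; case: eqP => // ->.
  have Emi : m i = (L + (m i - L))%N by rewrite subnKC ?HL.
  rewrite prod_upd [in LHS]Emi ffactD natrM exprD /c /u /t /b'.
  ring.
rewrite E !mulf_neq0 //.
- by rewrite pnatr_eq0 -lt0n ffact_gt0.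
- by rewrite expf_neq0.
- by rewrite expf_neq0.
Qed.

End SV.



Section Norm.
Variable R : rcfType.
Local Notation C := (R[i]).
Local Notation Im := (@complex.Im R).
Local Notation Re := (@complex.Re R).

Definition nm (z : C) : R := Num.sqrt (Re z ^+ 2 + Im z ^+ 2).

Lemma normE (z : C) : `|z| = (nm z)%:C%C.
Proof. exact: normc_def. Qed.

Lemma nm_ge0 z : 0 <= nm z.
Proof. exact: sqrtr_ge0. Qed.

Lemma nmM x y : nm (x * y) = nm x * nm y.
Proof. by apply: (@complexI R); rewrite rmorphM /= -!normE normrM. Qed.

Lemma nmD x y : nm (x + y) <= nm x + nm y.
Proof. by rewrite -lecR rmorphD /= -!normE ler_normD. Qed.

Lemma nmN x : nm (- x) = nm x.
Proof. by apply: (@complexI R); rewrite -!normE normrN. Qed.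

Lemma nm1 : nm 1 = 1.
Proof. by apply: (@complexI R); rewrite -!normE normr1. Qed.

Lemma nm_eq0 x : (nm x == 0) = (x == 0).
Proof.
rewrite -[x == 0]normr_eq0 normE; apply/eqP/eqP => [->|]; first by rewrite rmorph0.
by move=> /(congr1 (@complex.Re R)) /= ->.
Qed.

Lemma nm_prod (I : Type) (s : seq I) (F : I -> C) :
  nm (\prod_(j <- s) F j) = \prod_(j <- s) nm (F j).
Proof.
elim: s => [|x s IH]; first by rewrite !big_nil nm1.
by rewrite !big_cons nmM IH.
Qed.

Lemma Im_ge_nm x : - nm x <= Im x.
Proof.
rewrite lerNl; apply: le_trans (ler_norm _) _; rewrite normrN -sqrtr_sqr.
by rewrite /nm ler_sqrt ?lerDr ?sqr_ge0 // addr_ge0 ?sqr_ge0.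
Qed.

Lemma nm_iR (e : R) : 0 <= e -> nm (Complex 0 e) = e.
Proof. by move=> He; rewrite /nm /= expr0n add0r sqrtr_sqr ger0_norm. Qed.


Lemma prod_const_seq (I : Type) (s : seq I) (x : R) : \prod_(j <- s) x = x ^+ size s.
Proof. by elim: s => [|a s IH]; rewrite ?big_nil ?big_cons ?IH ?exprS. Qed.

Lemma INEQ (F : {poly C}) (d e : R) (N : nat) : 0 < d -> 0 <= e ->
  (forall s : C, nm s < d -> F.[s] != 0) -> (size F <= N.+1)%N ->
  nm (F.[Complex 0 e]) <= (1 + e / d) ^+ N * nm (F.[0]).
Proof.
move=> Hd He HF HN.
have HF0 : F.[0] != 0 by apply: HF; rewrite /nm /= expr0n addr0 sqrtr0.
have [rs Ers] := closed_field_poly_normal F.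
set c := lead_coef F in Ers.
have Hrs : forall r, r \in rs -> d <= nm r.
  move=> r Hr; rewrite leNgt; apply/negP => Hlt.
  have : root (\prod_(a <- rs) ('X - a%:P)) r by rewrite root_prod_XsubC.
  by rewrite rootE => /eqP H0; have := HF r Hlt; rewrite Ers hornerZ H0 mulr0 eqxx.
have Hsz : (size rs <= N)%N.
  have Fn0 : F != 0 by apply: contraNneq HF0 => ->; rewrite horner0.
  move: HN; rewrite Ers size_scale ?size_prod_XsubC // lead_coef_eq0 //.
set K := 1 + e / d.
have HK : 1 <= K by rewrite lerDl divr_ge0 // ltW.
rewrite Ers !hornerZ !nmM !horner_prod !nm_prod mulrCA ler_wpM2l ?nm_ge0 //.
apply: le_trans (_ : \prod_(r <- rs) (K * nm (0 - r)) <= _).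
  rewrite big_seq [X in _ <= X]big_seq; apply: ler_prod => r Hr; rewrite nm_ge0 /= !hornerXsubC.
  apply: le_trans (nmD _ _) _; rewrite add0r nmN nm_iR //.
  have := Hrs r Hr => Hr'.
  rewrite /K mulrDl mul1r addrC lerD2l.
  rewrite -[X in X <= _]mulr1 -[e / d * _]mulrA ler_wpM2l //.
  by rewrite ler_pdivlMl // mulr1.
rewrite big_split /= prod_const_seq.
under [X in _ <= _ * X]eq_bigr => r _ do rewrite hornerXsubC.
rewrite ler_wpM2r //; first by apply: prodr_ge0 => r _; rewrite nm_ge0.
case: (size rs) Hsz => [|k] Hk; first by rewrite expr0 exprn_ege1.
by rewrite -(subnK Hk) exprD ler_peMl ?exprn_ege1 // exprn_ge0 // (le_trans ler01).
Qed.


Lemma nm_sum (I : Type) (s : seq I) (F : I -> C) :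
  nm (\sum_(j <- s) F j) <= \sum_(j <- s) nm (F j).
Proof.
elim: s => [|x s IH]; first by rewrite !big_nil /nm /= expr0n addr0 sqrtr0.
by rewrite !big_cons (le_trans (nmD _ _)) // lerD2l.
Qed.

Lemma nm_real (x : R) : nm (x%:C%C) = `|x|.
Proof. by rewrite /nm /= expr0n addr0 sqrtr_sqr. Qed.

Lemma nmX (x : C) k : nm (x ^+ k) = nm x ^+ k.
Proof. by elim: k => [|k IH]; rewrite ?expr0 ?nm1 // !exprS nmM IH. Qed.

Lemma CONT (I : Type) (s : seq I) (c : I -> C) (ex : I -> nat) (e : R) : 0 < e ->
  exists2 d : R, 0 < d & forall x : R, 0 < x -> x < d ->
   nm (\sum_(j <- s) c j * (x%:C%C) ^+ ex j - \sum_(j <- s | ex j == 0%N) c j) < e.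
Proof.
move=> He; set M := \sum_(j <- s) nm (c j).
have HM : 0 <= M by apply: sumr_ge0 => j _; rewrite nm_ge0.
exists (Num.min 1 (e / (M + 1))).
  by rewrite lt_min ltr01 divr_gt0 // ltr_wpDl.
move=> x Hx; rewrite lt_min => /andP[Hx1 Hxe].
rewrite [X in _ - X]big_mkcond /= -sumrB.
apply: le_lt_trans (nm_sum _ _) _.
apply: (@le_lt_trans _ _ (\sum_(j <- s) nm (c j) * x)).
  apply: ler_sum => j _; case: eqP => Hj.
    by rewrite Hj expr0 mulr1 subrr /nm /= expr0n addr0 sqrtr0 mulr_ge0 ?nm_ge0 ?ltW.
  rewrite subr0 nmM nmX nm_real (ger0_norm (ltW Hx)) ler_wpM2l ?nm_ge0 //.
  case: (ex j) Hj => // k _; rewrite exprS ler_piMr ?exprn_ge0 ?(ltW Hx) //.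
  by rewrite exprn_ile1 ?(ltW Hx) ?(ltW Hx1).
rewrite -mulr_suml -/M.
apply: (le_lt_trans (ler_wpM2l HM (ltW Hxe))).
rewrite mulrA ltr_pdivrMr ?ltr_wpDl // [M * e]mulrC mulrDr mulr1.
by rewrite ltrDl.
Qed.


Lemma LIM (I : Type) (s : seq I) (cA cB : I -> C) (ex : I -> nat) (Kc : R) : 0 <= Kc ->
  (forall x : R, 0 < x -> nm (\sum_(j <- s) cA j * (x%:C%C) ^+ ex j) <=
                         Kc * nm (\sum_(j <- s) cB j * (x%:C%C) ^+ ex j)) ->
  \sum_(j <- s | ex j == 0%N) cB j = 0 -> \sum_(j <- s | ex j == 0%N) cA j = 0.
Proof.
move=> HK Hineq HB; apply/eqP; rewrite -nm_eq0; apply/negP => /negP Hnu.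
set A0 := \sum_(j <- s | ex j == 0%N) cA j in Hnu.
have Hnu' : 0 < nm A0 by rewrite lt_def Hnu nm_ge0.
have [d1 Hd1 H1] := CONT s cA ex (divr_gt0 Hnu' (ltr0Sn _ 1)).
have HK1 : 0 < 2 * (Kc + 1) by rewrite mulr_gt0 // ltr_wpDl.
have [d2 Hd2 H2] := CONT s cB ex (divr_gt0 Hnu' HK1).
set x := Num.min d1 d2 / 2.
have Hx : 0 < x by rewrite divr_gt0 // lt_min Hd1.
have Hxd : x < Num.min d1 d2 by rewrite ltr_pdivrMr // ltr_pMr ?ltr1n // lt_min Hd1.
move: Hxd; rewrite lt_min => /andP[Hx1 Hx2].
have Ha := H1 x Hx Hx1; have Hb := H2 x Hx Hx2.
rewrite -/A0 in Ha; rewrite HB subr0 in Hb.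
set a := \sum_(j <- s) cA j * (x%:C%C) ^+ ex j in Ha.
set b := \sum_(j <- s) cB j * (x%:C%C) ^+ ex j in Hb.
have Hab := Hineq x Hx.
have HA : nm A0 <= nm a + nm (a - A0).
  have := nmD a (- (a - A0)); rewrite nmN.
  by have -> : a + - (a - A0) = A0 by rewrite opprB addrC subrK.
have Hbb : Kc * nm b <= (Kc + 1) * nm b by rewrite ler_wpM2r ?nm_ge0 // lerDl.
have Hbb2 : (Kc + 1) * nm b < nm A0 / 2.
  have HK0 : 0 < Kc + 1 by rewrite ltr_wpDl.
  move: Hb; rewrite -(ltr_pM2l HK0).
  have -> : (Kc + 1) * (nm A0 / (2 * (Kc + 1))) = nm A0 / 2.
    by field; rewrite (gt_eqF HK0).
  by [].
lra.
Qed.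

End Norm.



Section Dig.
Local Open Scope nat_scope.
Lemma digits_inj k (D : nat) (f g : 'I_k -> nat) : (forall j, f j < D) -> (forall j, g j < D) ->
  \sum_(j < k) f j * D ^ j = \sum_(j < k) g j * D ^ j -> forall j, f j = g j.
Proof.
elim: k f g => [|k IH] f g Hf Hg E j; first by case: j.
have HD : 0 < D by apply: leq_ltn_trans (Hf ord0).
move: E; rewrite !big_ord_recl /= !expn0 !muln1.
have Hs : forall h : 'I_k.+1 -> nat, \sum_(i < k) h (lift ord0 i) * D ^ (bump 0 i) =
    (\sum_(i < k) h (lift ord0 i) * D ^ i) * D.
  move=> h; rewrite big_distrl /=; apply: eq_bigr => i _.
  by rewrite /bump /= add1n expnS mulnCA mulnC.
rewrite !Hs => E.
have E0 : f ord0 = g ord0.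
  by have := congr1 (modn ^~ D) E; rewrite /= ![_ + _ * D]addnC !modnMDl !modn_small.
have E1 : \sum_(i < k) f (lift ord0 i) * D ^ i = \sum_(i < k) g (lift ord0 i) * D ^ i.
  have := congr1 (divn ^~ D) E.
  by rewrite /= !divnDMl // !divn_small ?add0n.
case: (unliftP ord0 j) => [j' ->|->] //.
exact: (IH (fun i => f (lift ord0 i)) (fun i => g (lift ord0 i))).
Qed.
End Dig.

Section Propg.
Variable R : rcfType.
Local Notation C := (R[i]).
Local Notation Im := (@complex.Im R).
Variable n : nat.

Lemma exists_lower (I : eqType) (s : seq I) (f : I -> R) : (forall j, 0 < f j) ->
  exists2 d, 0 < d & forall j, j \in s -> d <= f j.
Proof.
move=> Hf; elim: s => [|x s [d Hd IH]]; first by exists 1.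
exists (Num.min d (f x)); first by rewrite lt_min Hd Hf.
move=> j; rewrite in_cons => /orP[/eqP ->|Hj]; first by rewrite ge_min lexx orbT.
by rewrite ge_min IH.
Qed.

Lemma size_sum_scale (I : Type) (s : seq I) (c : I -> C) (P : I -> {poly C}) :
  (size (\sum_(m <- s) c m *: P m)%R <= \sum_(m <- s) size (P m))%N.
Proof.
elim: s => [|x s IH]; first by rewrite !big_nil size_poly0.
rewrite !big_cons; apply: leq_trans (size_polyD _ _) _.
rewrite geq_max; apply/andP; split.
  by apply: leq_trans (size_scale_leq _ _) (leq_addr _ _).
by apply: leq_trans IH (leq_addl _ _).
Qed.

Lemma Bfun_ext (p : {mpoly C[n]}) i L (z1 z2 : 'I_n -> C) : z1 =1 z2 -> Bfun p i L z1 = Bfun p i L z2.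
Proof.
move=> E; rewrite /Bfun; apply: eq_bigr => m _; congr (_ * _); apply: eq_bigr => j _.
by rewrite /upd E.
Qed.

Lemma complex_iR (e : R) : Complex 0 e = 'i%C * e%:C%C.
Proof. by apply/eqP; rewrite eq_complex /=; apply/andP; split; apply/eqP; ring. Qed.


Lemma propagate (p : {mpoly C[n]}) (i : 'I_n) (L : nat) (z0 w : 'I_n -> C) :
  stable p -> (forall m, m \in msupp p -> (L <= m i)%N) ->
  (forall j, 0 < Im (z0 j)) -> (forall j, 0 < Im (w j)) ->
  Bfun p i L z0 = 0 -> Bfun p i L w = 0.
Proof.
move=> Hp HL Hz0 Hw HB0.
pose d j := w j - z0 j.
pose zs (s : C) j := z0 j + s * d j.
pose upp j : {poly C} := if j == i then 1 else (z0 j)%:P + d j *: 'X.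
pose Pm (m : 'X_{1..n}) := \prod_j (upp j) ^+ m j.
have hPm : forall m s, (Pm m).[s] = \prod_j (upd (zs s) i 1 j) ^+ m j.
  move=> m s; rewrite horner_prod; apply: eq_bigr => j _.
  rewrite horner_exp /upp /upd /zs; case: eqP => _; rewrite ?hornerC //.
  by rewrite hornerD hornerC hornerZ hornerX mulrC.
pose Bpoly := \sum_(m <- msupp p | m i == L) p@_m *: Pm m.
have hB : forall s, Bpoly.[s] = Bfun p i L (zs s).
  move=> s; rewrite /Bfun horner_sum; apply: eq_bigr => m _.
  by rewrite hornerZ hPm.
have [dl Hdl Hdlj] : exists2 dl, 0 < dl & forall j, j \in enum 'I_n ->
    dl <= Im (z0 j) / (nm (d j) + 1).
  by apply: exists_lower => j; rewrite divr_gt0 // ltr_wpDl ?nm_ge0.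
have Hreg : forall s, nm s < dl -> forall j, 0 < Im (zs s j).
  move=> s Hs j; have := Hdlj j (mem_enum _ j) => Hj.
  rewrite ler_pdivlMr ?ltr_wpDl ?nm_ge0 // mulrDr mulr1 in Hj.
  rewrite /zs ImD.
  have := Im_ge_nm (s * d j); rewrite nmM => Hs2.
  have : nm s * nm (d j) <= dl * nm (d j) by rewrite ler_wpM2r ?nm_ge0 // ltW.
  lra.
set Ns := (\sum_(m <- msupp p) size (Pm m))%N.
pose ex (m : 'X_{1..n}) := (m i - L)%N.
have Hconv : forall f : 'X_{1..n} -> C,
    \sum_(m <- msupp p | ex m == 0%N) p@_m * 'i%C ^+ ex m * f m =
    \sum_(m <- msupp p | m i == L) p@_m * f m.
  move=> f; rewrite big_seq_cond [RHS]big_seq_cond; apply: eq_big => m.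
    case Hm: (m \in msupp p) => //=.
    by rewrite /ex subn_eq0 eqn_leq HL // andbT.
  by rewrite andbC => /andP[/eqP -> _]; rewrite expr0 mulr1.
have Hroots : forall eta, 0 <= eta -> eta < dl -> Bpoly.[Complex 0 eta] = 0.
  move=> eta He0 He.
  set K := (1 + eta / dl) ^+ Ns.
  pose cA m := p@_m * 'i%C ^+ ex m * (Pm m).[Complex 0 eta].
  pose cB m := p@_m * 'i%C ^+ ex m * (Pm m).[0].
  have HK : 0 <= K by rewrite exprn_ge0 // addr_ge0 ?divr_ge0 // ltW.
  have HcB : \sum_(m <- msupp p | ex m == 0%N) cB m = 0.
    have E0 : Bfun p i L (zs 0) = Bfun p i L z0 by apply: Bfun_ext => j; rewrite /zs mul0r addr0.
    by rewrite Hconv -[RHS]HB0 -E0 -hB /Bpoly horner_sum; apply: eq_bigr => m _; rewrite hornerZ.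
  have Hineq : forall x : R, 0 < x ->
      nm (\sum_(m <- msupp p) cA m * (x%:C%C) ^+ ex m) <=
      K * nm (\sum_(m <- msupp p) cB m * (x%:C%C) ^+ ex m).
    move=> x Hx; set t := Complex 0 x.
    pose Fx := \sum_(m <- msupp p) (p@_m * t ^+ ex m) *: Pm m.
    have hF : forall s, Fx.[s] = \sum_(m <- msupp p) p@_m * t ^+ ex m * (Pm m).[s].
      by move=> s; rewrite /Fx horner_sum; apply: eq_bigr => m _; rewrite hornerZ.
    have EA : \sum_(m <- msupp p) cA m * (x%:C%C) ^+ ex m = Fx.[Complex 0 eta].
      by rewrite hF; apply: eq_bigr => m _; rewrite /cA /t complex_iR exprMn; ring.
    have EB : \sum_(m <- msupp p) cB m * (x%:C%C) ^+ ex m = Fx.[0].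
      by rewrite hF; apply: eq_bigr => m _; rewrite /cB /t complex_iR exprMn; ring.
    rewrite EA EB; apply: INEQ => //.
      move=> s Hs.
      have Ht : 0 < Im t by [].
      have := Hp _ (upd_H i (Hreg s Hs) Ht).
      have -> : p.@[upd (zs s) i t] = Fx.[s] * t ^+ L.
        rewrite mevalE hF mulr_suml; apply: eq_big_seq => m Hm.
        rewrite prod_upd hPm -{1}(subnK (HL m Hm)) exprD /ex; ring.
      by apply: contraNneq => ->; rewrite mul0r.
    by apply: leq_trans (size_sum_scale _ _ _) (leqnSn _).
  have := @LIM R _ (msupp p) cA cB ex K HK Hineq HcB.
  rewrite (Hconv (fun m => (Pm m).[Complex 0 eta])) => E.
  by rewrite /Bpoly horner_sum -[RHS]E; apply: eq_bigr => m _; rewrite hornerZ.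
have HBp : Bpoly = 0.
  apply: (@roots_geq_poly_eq0 _ _
     [seq Complex 0 (dl / (k.+1)%:R) | k <- iota 1 (size Bpoly)]).
  - apply/allP => x /mapP [k Hk ->]; rewrite rootE Hroots //.
      by rewrite divr_ge0 // ltW.
    rewrite ltr_pdivrMr ?ltr0Sn // ltr_pMr // ltr1n ltnS.
    by move: Hk; rewrite mem_iota => /andP[].
  - rewrite map_inj_uniq ?iota_uniq // => k l /eqP; rewrite eq_complex /= => /andP[_ /eqP E].
    move: E => /(mulfI (lt0r_neq0 Hdl)) /invr_inj /eqP.
    by rewrite eqr_nat eqSS => /eqP.
  - by rewrite size_map size_iota.
have := hB 1; rewrite HBp horner0 => /esym E.
rewrite -[RHS]E; apply: Bfun_ext => j; rewrite /zs /d mul1r.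
by rewrite addrC subrK.
Qed.


Lemma kron (p : {mpoly C[n]}) (i : 'I_n) (L : nat) (m0 : 'X_{1..n}) :
  m0 \in msupp p -> m0 i = L ->
  (forall w, (forall j, 0 < Im (w j)) -> Bfun p i L w = 0) -> False.
Proof.
move=> Hm0 Hm0L Hall.
set D := msize p.
have HD : forall m, m \in msupp p -> forall j, (m j < D)%N.
  move=> m Hm j; apply: leq_ltn_trans (msize_mdeg_lt Hm).
  by rewrite mdegE (bigD1 j) //= leq_addr.
pose e (m : 'X_{1..n}) := (\sum_(j < n) m j * D ^ j)%N.
pose K : {poly C} := \sum_(m <- msupp p | m i == L) (p@_m * 'i%C ^+ mdeg m) *: 'X^(e m).
have HK : forall x : R, 0 < x -> K.[x%:C%C] = 0.
  move=> x Hx.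
  pose w (j : 'I_n) := ((x ^+ (D ^ j))%:C * 'i)%C.
  have Hw : forall j, 0 < Im (w j) by move=> j; rewrite /w ImiRe /= exprn_gt0.
  have := Hall w Hw; rewrite /Bfun => E.
  have : (w i) ^+ L * Bfun p i L w = K.[x%:C%C].
    rewrite /Bfun mulr_sumr /K horner_sum; apply: eq_bigr => m /eqP HmL.
    rewrite hornerZ hornerXn mulrCA -HmL -prod_upd.
    have -> : \prod_j upd w i (w i) j ^+ m j = \prod_j w j ^+ m j.
      by apply: eq_bigr => j _; rewrite /upd; case: eqP => // ->.
    rewrite /w; under eq_bigr => j _ do rewrite exprMn -rmorphXn -exprM.
    have Hprod : \prod_(j < n) (x ^+ (D ^ j * m j))%:C%C = (x%:C%C) ^+ e m.
      rewrite -rmorph_prod prodrXr rmorphXn /e; congr (_ ^+ _).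
      by apply: eq_bigr => j _; rewrite mulnC.
    by rewrite big_split /= prodrXr mdegE Hprod [x%:C%C ^+ _ * _]mulrC mulrA.
  by move=> <-; rewrite /Bfun E mulr0.
have HK0 : K = 0.
  apply: (@roots_geq_poly_eq0 _ _ [seq (k.+1)%:R | k <- iota 0 (size K)]).
  - apply/allP => y /mapP [k _ ->]; rewrite rootE.
    by rewrite -(rmorph_nat (real_complex R)) HK // ltr0Sn.
  - by rewrite map_inj_uniq ?iota_uniq // => k l /eqP; rewrite eqr_nat eqSS => /eqP.
  - by rewrite size_map size_iota.
have := congr1 (fun q : {poly C} => q`_(e m0)) HK0.
rewrite /K coef_sumMXn coef0.
rewrite big_seq_cond (eq_bigl (fun m => m == m0)); last first.
  move=> m; case Hm: (m \in msupp p) => /=; last first.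
    by apply/esym/negbTE; apply: contraFneq Hm => ->.
  apply/andP/eqP => [[/eqP HmL /eqP He]|->]; last by rewrite Hm0L.
  apply/mnmP => j.
  exact: (digits_inj (HD m Hm) (HD m0 Hm0) He).
rewrite -big_filter filter_pred1_uniq ?msupp_uniq // big_seq1 => /eqP.
by rewrite mulf_eq0 mcoeff_eq0 Hm0 /= expf_eq0 eq_complex /= oner_eq0 !andbF.
Qed.

End Propg.



Section Main.
Local Open Scope complex_scope.
Variable R : rcfType.
Local Notation C := (R[i]).
Local Notation Im := (@complex.Im R).
Variable n : nat.

Lemma stab_prod (FH : FH_prop R n) (beta : 'X_{1..n}) (s : seq 'I_n) :
  preserves_stability (diag_op (fun a : 'X_{1..n} => \prod_(i <- s) (beta i ^_ a i)%:R : C)).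
Proof.
elim: s => [|i s IH] p Hp.
  by right; rewrite (eq_diag_op _ (fun m => big_nil _ _ _ _)) diag_op1.
rewrite (eq_diag_op _ (fun m => big_cons _ _ _ _ _ _)) -diag_op_comp.
case: (IH p Hp) => [->|H]; first by left; rewrite diag_op0.
exact: SV.
Qed.

Lemma scale_stab (mu : 'I_n -> R) : (forall i, 0 < mu i) ->
  preserves_stability (diag_op (fun a : 'X_{1..n} => \prod_i ((mu i)%:C) ^+ a i : C)).
Proof.
move=> Hmu p Hp; right => z Hz.
rewrite diag_op_meval.
have -> : \sum_(m <- msupp p) (\prod_i (mu i)%:C ^+ m i) * p@_m * \prod_i z i ^+ m i =
   p.@[fun i => (mu i)%:C * z i].
  rewrite mevalE; apply: eq_bigr => m _.
  rewrite [_ * p@_m]mulrC -mulrA -big_split /=; congr (_ * _).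
  by apply: eq_bigr => j _; rewrite exprMn.
apply: Hp => j; have := Hz j; have := Hmu j.
case: (z j) => a b /= H1 H2; rewrite mul0r addr0.
exact: mulr_gt0.
Qed.


Lemma pochf_le (alpha beta : 'X_{1..n}) : pochf alpha beta != 0%N ->
  forall i, (alpha i <= beta i)%N.
Proof.
move=> H i; rewrite leqNgt; apply/negP => Hlt; move: H.
by rewrite /pochf (bigD1 i) //= ffact_small // mul0n.
Qed.

Lemma Jcoef_split (alpha beta : 'X_{1..n}) :
  Jcoef R[i] alpha beta =
  (\prod_i ((if beta i == 0%N then 1 else ((beta i)%:R)^-1 : R)%:C) ^+ alpha i) *
  (pochf alpha beta)%:R.
Proof.
rewrite /Jcoef mulrC; case: (eqVneq (pochf alpha beta) 0%N) => H.
  by rewrite H !mulr0.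
congr (_ * _); apply: eq_bigr => i _.
have Hle := pochf_le H i.
case: eqP => Hb.
  by move: Hle; rewrite Hb leqn0 => /eqP ->; rewrite !expr0 invr1.
by rewrite -exprVn fmorphV rmorph_nat.
Qed.

Theorem main_of_FH (FH : FH_prop R n) (beta : 'X_{1..n}) :
  preserves_stability (diag_op (fun alpha => Jcoef R[i] alpha beta)) /\
  preserves_stability (diag_op (fun alpha => (pochf alpha beta)%:R : R[i])).
Proof.
have HP : preserves_stability (diag_op (fun alpha => (pochf alpha beta)%:R : R[i])).
  move=> p Hp; rewrite (eq_diag_op _ (fun m => natr_prod _ _ _ _)).
  exact: stab_prod.
split => // p Hp.
rewrite (eq_diag_op _ (fun m => Jcoef_split m beta)) -diag_op_comp.
case: (HP p Hp) => [->|H]; first by left; rewrite diag_op0.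
apply: scale_stab => // i; case: eqP => Hb; first exact: ltr01.
by rewrite invr_gt0 ltr0n lt0n; apply/eqP.
Qed.

End Main.

Section Final.
Variable R : rcfType.
Variable n : nat.
Lemma FH_holds : FH_prop R n.
Proof.
move=> p i L Hp HL [m0 Hm0 Hm0L] z Hz; apply/eqP => HB0.
apply: (kron Hm0 Hm0L) => w Hw.
exact: (propagate Hp HL Hz Hw HB0).
Qed.
End Final.

Theorem lemma5p2 (R : rcfType) (n : nat) (beta : 'X_{1..n}) :
  preserves_stability (diag_op (fun alpha => Jcoef R[i] alpha beta)) /\
  preserves_stability (diag_op (fun alpha => (pochf alpha beta)%:R : R[i])).
Proof. exact: (main_of_FH (@FH_holds R n) beta). Qed.
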